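(* Let $E/\mathbb{Q}$ be an elliptic curve with $j$-invariant $0$ and a rational point $P$ of order $3$. Then $\widetilde E=E/\langle P\rangle$ has a rational point of order $3$ if and only if $E$ is $\mathbb{Q}$-isomorphic to $y^2+y=x^3$ and $\widetilde E$ is $\mathbb{Q}$-isomorphic to $y^2+y=x^3-7$. Moreover, $y^2+y=x^3-7$ is $\mathbb{Q}$-isomorphic to $y^2+24xy+576y=x^3$ (the curve with LMFDB label 27.a3).
   Context: $E/\langle P\rangle$ denotes the quotient of $E$ by the subgroup generated by $P$, i.e. the $3$-isogenous elliptic curve over $\mathbb{Q}$. *)

(* Defs.v *)
From mathcomp Require Import all_boot all_order all_algebra.
Set Implicit Arguments. Unset Strict Implicit. Unset Printing Implicit Defensive.
Import Order.TTheory GRing.Theory Num.Theory.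
Local Open Scope ring_scope.

(* A Weierstrass equation y^2 + a1 xy + a3 y = x^3 + a2 x^2 + a4 x + a6 over Q. *)
Record wcurve := WCurve { a1 : rat; a2 : rat; a3 : rat; a4 : rat; a6 : rat }.

Definition b2 (E : wcurve) : rat := a1 E ^+ 2 + 4 * a2 E.
Definition b4 (E : wcurve) : rat := 2 * a4 E + a1 E * a3 E.
Definition b6 (E : wcurve) : rat := a3 E ^+ 2 + 4 * a6 E.
Definition b8 (E : wcurve) : rat :=
  a1 E ^+ 2 * a6 E + 4 * a2 E * a6 E - a1 E * a3 E * a4 E
  + a2 E * a3 E ^+ 2 - a4 E ^+ 2.
Definition c4 (E : wcurve) : rat := b2 E ^+ 2 - 24 * b4 E.
Definition disc (E : wcurve) : rat :=
  - b2 E ^+ 2 * b8 E - 8 * b4 E ^+ 3 - 27 * b6 E ^+ 2 + 9 * b2 E * b4 E * b6 E.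
Definition elliptic (E : wcurve) : Prop := disc E != 0.
Definition jinv (E : wcurve) : rat := c4 E ^+ 3 / disc E.

(* Rational points: None is the point at infinity O. *)
Definition point := option (rat * rat).

Definition on_curve (E : wcurve) (P : point) : Prop :=
  match P with
  | None => True
  | Some (x, y) =>
      y ^+ 2 + a1 E * x * y + a3 E * y
      = x ^+ 3 + a2 E * x ^+ 2 + a4 E * x + a6 E
  end.

(* Group law (Silverman, Algorithm III.2.3). *)
Definition padd (E : wcurve) (P Q : point) : point :=
  match P, Q with
  | None, _ => Q
  | _, None => P
  | Some (x1, y1), Some (x2, y2) =>
      if (x1 == x2) && (y1 + y2 + a1 E * x2 + a3 E == 0) then None
      else
        let: (l, n) :=
          if x1 != x2 then
            ((y2 - y1) / (x2 - x1), (y1 * x2 - y2 * x1) / (x2 - x1))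
          else
            ((3 * x1 ^+ 2 + 2 * a2 E * x1 + a4 E - a1 E * y1)
               / (2 * y1 + a1 E * x1 + a3 E),
             (- x1 ^+ 3 + a4 E * x1 + 2 * a6 E - a3 E * y1)
               / (2 * y1 + a1 E * x1 + a3 E)) in
        let x3 := l ^+ 2 + a1 E * l - a2 E - x1 - x2 in
        Some (x3, - (l + a1 E) * x3 - n - a3 E)
  end.

Definition order3 (E : wcurve) (P : point) : Prop :=
  on_curve E P /\ P <> None /\ padd E (padd E P P) P = None.

(* Velu's formulas for the quotient of E by the subgroup {O, P, -P}
   generated by a point P of order 3 (no 2-torsion; one representative P). *)
Definition velu3 (E : wcurve) (P : point) : wcurve :=
  match P with
  | None => E
  | Some (xq, yq) =>
      let gx := 3 * xq ^+ 2 + 2 * a2 E * xq + a4 E - a1 E * yq in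
      let gy := - 2 * yq - a1 E * xq - a3 E in
      let t := 2 * gx - a1 E * gy in
      let u := gy ^+ 2 in
      let w := u + xq * t in
      WCurve (a1 E) (a2 E) (a3 E) (a4 E - 5 * t)
             (a6 E - (a1 E ^+ 2 + 4 * a2 E) * t - 7 * w)
  end.

(* Q-isomorphism of Weierstrass equations: a change of variables
   x = u^2 x' + r, y = u^3 y' + s u^2 x' + t with u, r, s, t in Q, u != 0
   (Silverman, Table III.3.1); E' is the transformed curve. *)
Definition isoQ (E E' : wcurve) : Prop :=
  exists u r s t : rat, u != 0 /\
    u * a1 E' = a1 E + 2 * s /\
    u ^+ 2 * a2 E' = a2 E - s * a1 E + 3 * r - s ^+ 2 /\
    u ^+ 3 * a3 E' = a3 E + r * a1 E + 2 * t /\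
    u ^+ 4 * a4 E' = a4 E - s * a3 E + 2 * r * a2 E - (t + r * s) * a1 E
                     + 3 * r ^+ 2 - 2 * s * t /\
    u ^+ 6 * a6 E' = a6 E + r * a4 E + r ^+ 2 * a2 E + r ^+ 3 - t * a3 E
                     - t ^+ 2 - r * t * a1 E.

Definition E0 : wcurve := WCurve 0 0 1 0 0.
Definition E7 : wcurve := WCurve 0 0 1 0 (-7).
Definition E27a3 : wcurve := WCurve 24 0 576 0 0.

(* Main.v *)
Require Import Defs.
From mathcomp Require Import all_boot all_order all_algebra.
From mathcomp Require Import ring lra zify.
Import Order.TTheory GRing.Theory Num.Theory.
Local Open Scope ring_scope.

Definition den (E : wcurve) (x y : rat) := 2 * y + a1 E * x + a3 E.
Definition gxf (E : wcurve) (x y : rat) := 3 * x ^+ 2 + 2 * a2 E * x + a4 E - a1 E * y.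
Definition lam (E : wcurve) (x y : rat) := gxf E x y / den E x y.

Lemma order3P E x y : order3 E (Some (x, y)) <->
  [/\ on_curve E (Some (x, y)), den E x y != 0 &
      lam E x y ^+ 2 + a1 E * lam E x y - a2 E - 3 * x = 0].
Proof.
rewrite /order3 /padd eqxx /=.
have hdd : y + y + a1 E * x + a3 E = den E x y by rewrite /den; ring.
rewrite hdd -/(gxf E x y) -/(den E x y) -/(lam E x y).
case: eqP => [hd0|hdn].
  split; first by case=> _ [_ h]; discriminate h.
  by case.
set l := lam E x y.
set x3 := l ^+ 2 + a1 E * l - a2 E - x - x.
have hc : l ^+ 2 + a1 E * l - a2 E - 3 * x = x3 - x by rewrite /x3; ring.
rewrite hc; split.
  case=> hon [_ H]; split => //.
  move: H; case: eqP => [e|ne]; first by rewrite e subrr.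
  rewrite andFb => h; discriminate h.
case=> hon _ /eqP; rewrite subr_eq0 => /eqP hx3.
split; first by []. split; first by [].
rewrite hx3 eqxx andTb.
case: eqP => // hne; exfalso; apply: hne.
have ha6 : a6 E = y ^+ 2 + a1 E * x * y + a3 E * y - x ^+ 3 - a2 E * x ^+ 2 - a4 E * x.
  by rewrite hon; ring.
move: hdn; rewrite /l /lam /gxf /den ha6 => hdn.
field.
by apply/eqP.
Qed.
Definition chg (E : wcurve) (u r s t : rat) : wcurve :=
  let b1 := u * a1 E - 2 * s in
  let b2 := u ^+ 2 * a2 E + s * b1 - 3 * r + s ^+ 2 in
  let b3 := u ^+ 3 * a3 E - r * b1 - 2 * t in
  let b4 := u ^+ 4 * a4 E + s * b3 - 2 * r * b2 + (t + r * s) * b1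
            - 3 * r ^+ 2 + 2 * s * t in
  let b6 := u ^+ 6 * a6 E - r * b4 - r ^+ 2 * b2 - r ^+ 3 + t * b3
            + t ^+ 2 + r * t * b1 in
  WCurve b1 b2 b3 b4 b6.

Lemma isoQ_chg E E' : isoQ E E' <-> exists u r s t, u != 0 /\ E = chg E' u r s t.
Proof.
split.
  case=> u [r [s [t [hu [h1 [h2 [h3 [h4 h6]]]]]]]].
  exists u, r, s, t; split => //.
  case: E h1 h2 h3 h4 h6 => b1 b2 b3 b4 b6 /= h1 h2 h3 h4 h6.
  rewrite /chg /= h1 h2 h3 h4 h6; congr WCurve; ring.
case=> u [r [s [t [hu ->]]]].
exists u, r, s, t; split => //=.
split; first by ring.
split; first by ring.
split; first by ring.
split; first by ring.
ring.
Qed.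

Lemma isoQ_sym E E' : isoQ E E' -> isoQ E' E.
Proof.
move/isoQ_chg=> [u [r [s [t [hu ->]]]]].
apply/isoQ_chg.
exists u^-1, (- r / u ^+ 2), (- s / u), ((r * s - t) / u ^+ 3); split.
  by rewrite invr_eq0.
case: E' => b1 b2 b3 b4 b6; rewrite /chg /=; congr WCurve; field; exact: hu.
Qed.

Lemma isoQ_trans A B C : isoQ A B -> isoQ B C -> isoQ A C.
Proof.
move/isoQ_chg=> [u1 [r1 [s1 [t1 [hu1 ->]]]]].
move/isoQ_chg=> [u2 [r2 [s2 [t2 [hu2 ->]]]]].
apply/isoQ_chg.
exists (u1 * u2), (r1 + u1 ^+ 2 * r2), (s1 + u1 * s2), (t1 + u1 ^+ 3 * t2 + s1 * u1 ^+ 2 * r2).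
split; first by rewrite mulf_neq0.
case: C => b1 b2 b3 b4 b6; rewrite /chg /=; congr WCurve; ring.
Qed.
Lemma order3_chg E' u r s t x y : u != 0 -> order3 E' (Some (x, y)) ->
  order3 (chg E' u r s t) (Some (u ^+ 2 * x + r, u ^+ 3 * y + s * u ^+ 2 * x + t)).
Proof.
move=> hu /order3P [hon hd hc]; apply/order3P.
have hden : den (chg E' u r s t) (u ^+ 2 * x + r) (u ^+ 3 * y + s * u ^+ 2 * x + t)
   = u ^+ 3 * den E' x y by rewrite /den /=; ring.
have hgx : gxf (chg E' u r s t) (u ^+ 2 * x + r) (u ^+ 3 * y + s * u ^+ 2 * x + t)
   = u ^+ 4 * gxf E' x y + s * u ^+ 3 * den E' x y by rewrite /gxf /den /=; ring.
have hlam : lam (chg E' u r s t) (u ^+ 2 * x + r) (u ^+ 3 * y + s * u ^+ 2 * x + t)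
   = u * lam E' x y + s.
  rewrite /lam hden hgx; move: hd; rewrite /den => hd; field.
  by rewrite hd hu.
split.
- move: hon; rewrite /on_curve /= => hon.
  have ha6 : a6 E' = y ^+ 2 + a1 E' * x * y + a3 E' * y - x ^+ 3 - a2 E' * x ^+ 2 - a4 E' * x.
    by rewrite hon; ring.
  rewrite ha6; ring.
- by rewrite hden mulf_neq0 // expf_neq0.
- rewrite hlam /=.
  set l := lam E' x y in hc *.
  have ha2 : a2 E' = l ^+ 2 + a1 E' * l - 3 * x by rewrite -[RHS]subr0 -hc; ring.
  rewrite ha2; ring.
Qed.
Definition N (a b : rat) := WCurve a 0 b 0 0.
Definition V (a b : rat) := WCurve a 0 b (- 5 * (a * b)) (- (a ^+ 3 * b) - 7 * b ^+ 2).

Lemma eq_via {R : comPzRingType} (A B C D : R) : C = D -> A - B = C - D -> A = B.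
Proof. by move=> h e; apply: subr0_eq; rewrite e h subrr. Qed.

Lemma normal_form E x0 y0 : order3 E (Some (x0, y0)) ->
  exists a b, [/\ isoQ E (N a b), isoQ (velu3 E (Some (x0, y0))) (V a b),
                  c4 E = c4 (N a b) & disc E = disc (N a b)].
Proof.
move/order3P=> [hon hd hc].
have hs : lam E x0 y0 * den E x0 y0 = gxf E x0 y0 by rewrite /lam divfK.
move: hc hs; set s := lam E x0 y0; clearbody s; rewrite /den /gxf => hc hs.
have ha2 : a2 E = s ^+ 2 + a1 E * s - 3 * x0 by eapply eq_via; [exact: (esym hc) | ring].
have ha4 : a4 E = s * (2 * y0 + a1 E * x0 + a3 E) - 3 * x0 ^+ 2 - 2 * a2 E * x0 + a1 E * y0.
  by eapply eq_via; [exact: (esym hs) | ring].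
have ha6 : a6 E = y0 ^+ 2 + a1 E * x0 * y0 + a3 E * y0 - x0 ^+ 3 - a2 E * x0 ^+ 2 - a4 E * x0.
  by eapply eq_via; [exact: (esym hon) | ring].
exists (a1 E + 2 * s), (2 * y0 + a1 E * x0 + a3 E); split.
- exists 1, x0, s, y0; rewrite /N /=; split; first by [].
  split; first by ring.
  split; first by rewrite ha2; ring.
  split; first by ring.
  split; first by rewrite ha4 ha2; ring.
  by rewrite ha6; ring.
- exists 1, x0, s, y0; rewrite /V /velu3 /=; split; first by [].
  split; first by ring.
  split; first by rewrite ha2; ring.
  split; first by ring.
  split; first by rewrite ha4 ha2; ring.
  by rewrite ha6 ha4 ha2; ring.
- by rewrite /c4 /b2 /b4 /N /= ha4 ha2; ring.
- by rewrite /disc /b2 /b4 /b6 /b8 /N /= ha6 ha4 ha2; ring.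
Qed.

Lemma mod3_split (d : int) : exists q r : int, d = 3 * q + r /\ (r = 0 \/ r = 1 \/ r = 2).
Proof.
exists (d %/ 3)%Z, (d %% 3)%Z; split.
  by rewrite {1}(divz_eq d 3) mulrC.
have h1 := @modz_ge0 d 3 isT. have h2 := @ltz_pmod d 3 isT. lia.
Qed.

Lemma div3_of (d K : int) : 17 * d ^+ 3 = 3 * K -> exists q, d = 3 * q.
Proof.
have [q [r [-> hr]]] := mod3_split d => h.
exists q.
have [M hM] : exists M, 17 * r ^+ 3 = 3 * M.
  exists (K - 17 * (9 * q^+3 + 9 * q^+2 * r + 3 * q * r ^+ 2)).
  rewrite mulrBr -h; ring.
case: hr => [->|[e|e]]; first by rewrite addr0.
all: rewrite e in hM; move: hM; rewrite ?expr1n ?mulr1 => hM; lia.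
Qed.

Lemma div3_of' (n K : int) : 64 * n ^+ 3 = 9 * K -> exists p, n = 3 * p.
Proof.
have [q [r [-> hr]]] := mod3_split n => h.
exists q.
have [M hM] : exists M, 64 * r ^+ 3 = 9 * M.
  exists (K - 64 * (3 * q^+3 + 3 * q^+2 * r + q * r ^+ 2)).
  rewrite mulrBr -h; ring.
case: hr => [->|[e|e]]; first by rewrite addr0.
all: rewrite e in hM; move: hM; rewrite ?expr1n ?mulr1 => hM; lia.
Qed.

Lemma no_root (x : rat) : 192 * x ^+ 3 - 72 * x - 17 != 0.
Proof.
apply/negP => /eqP hx0.
set n := numq x; set d := denq x.
have dn0 : (d%:~R : rat) != 0 by rewrite intr_eq0 denq_neq0.
have hx : x = n%:~R / d%:~R by rewrite divq_num_den.
have hz : 192 * n ^+ 3 - 72 * n * d ^+ 2 - 17 * d ^+ 3 = 0.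
  apply: (@intr_inj rat).
  have -> : ((192 * n ^+ 3 - 72 * n * d ^+ 2 - 17 * d ^+ 3)%:~R : rat)
     = (d%:~R) ^+ 3 * (192 * x ^+ 3 - 72 * x - 17).
    rewrite hx !rmorphB !rmorphM /= ?rmorphXn /=. field. done.
  by rewrite hx0 mulr0.
have [q hq] : exists q, d = 3 * q.
  apply: (@div3_of d (64 * n ^+ 3 - 24 * n * d ^+ 2)).
  have -> : 17 * d ^+ 3 = 192 * n ^+ 3 - 72 * n * d ^+ 2.
    by rewrite -[LHS]add0r -hz; ring.
  ring.
have [p hp] : exists p, n = 3 * p.
  apply: (@div3_of' n (24 * n * q ^+ 2 + 17 * q ^+ 3)).
  rewrite hq in hz.
  have e2 : 3 * (64 * n ^+ 3) = 3 * (9 * (24 * n * q ^+ 2 + 17 * q ^+ 3)).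
    apply: subr0_eq; rewrite -hz; ring.
  by apply: (mulfI (_ : 3 != 0)) e2.
have h1 : (3 %| `|n|)%N by rewrite hp abszM dvdn_mulr.
have h2 : (3 %| `|d|)%N by rewrite hq abszM dvdn_mulr.
have := coprime_num_den x; rewrite /coprime => /eqP hg.
have : (3 %| gcdn `|numq x| `|denq x|)%N by rewrite dvdn_gcd h1 h2.
by rewrite hg.
Qed.

Lemma eq_viak {R : comPzRingType} (k A B C D : R) : C = D -> A - B = k * (C - D) -> A = B.
Proof. by move=> h e; apply: subr0_eq; rewrite e h subrr mulr0. Qed.

Lemma caseA (b x y : rat) : b != 0 -> order3 (V 0 b) (Some (x, y)) ->
  exists c : rat, c ^+ 3 = b.
Proof.
move=> hb /order3P [hon hd hc].
move: hon hd hc; rewrite /on_curve /lam /gxf /den /V /=.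
set D := 2 * y + 0 * x + b.
move=> hon hd hc.
have hD2 : D ^+ 2 = 4 * x ^+ 3 - 27 * b ^+ 2.
  by eapply (eq_viak 4); [exact: hon | rewrite /D; ring].
have hx : x * (x ^+ 3 - 27 * b ^+ 2) = 0.
  have h2 : (3 * x ^+ 2) ^+ 2 - 3 * x * D ^+ 2 = 0.
    rewrite -[RHS](mulr0 (D ^+ 2)) -hc; field; exact: hd.
  by eapply (eq_viak 3^-1); [exact: (esym h2) | rewrite hD2; field].
move/eqP: hx; rewrite mulf_eq0 => /orP [/eqP x0 | /eqP hx3].
  exfalso. rewrite x0 in hD2.
  have h1 : 0 <= D ^+ 2 := sqr_ge0 D.
  have h2 : 0 < b ^+ 2 by rewrite exprn_even_gt0 //.
  lra.
have xn0 : x != 0.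
  apply/negP => /eqP x0; move: hx3; rewrite x0 => h.
  have : b ^+ 2 = 0 by eapply (eq_viak (- 27^-1)); [exact: h | field].
  by move/eqP; rewrite sqrf_eq0 (negbTE hb).
exists (3 * b / x).
have hx3' : x ^+ 3 = 27 * b ^+ 2 by eapply eq_via; [exact: hx3 | ring].
rewrite expr_div_n hx3'; field.
exact: hb.
Qed.

Lemma eq_via2 {R : comPzRingType} (k1 k2 A B C1 D1 C2 D2 : R) : C1 = D1 -> C2 = D2 ->
  A - B = k1 * (C1 - D1) + k2 * (C2 - D2) -> A = B.
Proof. by move=> h1 h2 e; apply: subr0_eq; rewrite e h1 h2 !subrr !mulr0 addr0. Qed.

Lemma no3_V1 (x y : rat) : ~ order3 (V 1 (24^-1)) (Some (x, y)).
Proof.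
move/order3P => [hon hd hc].
move: hon hd hc; rewrite /on_curve /lam /gxf /den /V /=.
set D := 2 * y + 1 * x + 24^-1.
set g := 3 * x ^+ 2 + 2 * 0 * x + -5 * (1 * 24^-1) - 1 * y.
move=> hon hd hc.
have h2 : g ^+ 2 + g * D - 3 * x * D ^+ 2 = 0.
  rewrite -[RHS](mulr0 (D ^+ 2)) -hc; field; exact: hd.
have hD2 : D ^+ 2 = 4 * (x ^+ 3 - 5 / 24 * x - 31 / 576) + (x + 24^-1) ^+ 2.
  by eapply (eq_viak 4); [exact: hon | rewrite /D; field].
have hpsi : (3 * x + 1) * (192 * x ^+ 3 - 72 * x - 17) = 0.
  by eapply (eq_via2 (-192) (-192 * (1 + 12 * x))); [exact: h2 | exact: hon | rewrite /g /D; field].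
move/eqP: hpsi; rewrite mulf_eq0 => /orP [/eqP h1 | h3]; last first.
  by move: h3; rewrite (negbTE (no_root x)).
have ex : x = - 3^-1 by eapply (eq_viak 3^-1); [exact: h1 | field].
rewrite ex in hD2.
have : 0 <= D ^+ 2 := sqr_ge0 D.
rewrite hD2. lra.
Qed.

Lemma caseB (a x y : rat) : a != 0 -> ~ order3 (V a (a ^+ 3 / 24)) (Some (x, y)).
Proof.
move=> ha h.
have e : chg (V a (a ^+ 3 / 24)) a^-1 0 0 0 = V 1 (24^-1).
  rewrite /chg /V /=; congr WCurve; field; exact: ha.
have := @order3_chg _ a^-1 0 0 0 x y (invr_neq0 ha) h; rewrite e.
exact: no3_V1.
Qed.

Lemma c4N a b : c4 (N a b) = a * (a ^+ 3 - 24 * b).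
Proof. rewrite /c4 /b2 /b4 /N /=; ring. Qed.

Lemma discN a b : disc (N a b) = b ^+ 3 * (a ^+ 3 - 27 * b).
Proof. rewrite /disc /b2 /b4 /b6 /b8 /N /=; ring. Qed.

Lemma E7_pt : order3 E7 (Some (3, 4)).
Proof.
apply/order3P; rewrite /on_curve /lam /gxf /den /E7 /=.
split; first by ring.
  by [].
by [].
Qed.

Lemma E7_E27 : isoQ E7 E27a3.
Proof.
exists (4^-1), 3, 3, 4; rewrite /E7 /E27a3 /=.
split; first by [].
split; first by field.
split; first by field.
split; first by field.
split; first by field.
by field.
Qed.

Theorem proposition4p3 :
  (forall (E : wcurve) (P : point),
     elliptic E -> jinv E = 0 -> order3 E P ->
     ((exists Q : point, order3 (velu3 E P) Q) <->
      (isoQ E E0 /\ isoQ (velu3 E P) E7)))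
  /\ isoQ E7 E27a3.
Proof.
split; last exact: E7_E27.
move=> E [[x0 y0]|] hE hj h3; last by case: h3 => _ [].
have [a [b [hiso hvel hc4 hdisc]]] := normal_form _ _ _ h3.
have hc0 : c4 E = 0.
  move: hj; rewrite /jinv => /eqP; rewrite mulf_eq0 invr_eq0 (negbTE hE) orbF expf_eq0.
  by case/andP => _ /eqP.
have hN : disc (N a b) != 0 by rewrite -hdisc.
move: hN; rewrite discN mulf_eq0 negb_or expf_eq0 => /andP [hb hab].
rewrite andTb in hb.
have hc : a * (a ^+ 3 - 24 * b) = 0 by rewrite -c4N -hc4.
split.
- move=> [[[qx qy]|] hQ]; last by case: hQ => _ [].
  have [u [r [s [t [hu hV]]]]] := (isoQ_chg _ _).1 (isoQ_sym _ _ hvel).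
  have hQ' := @order3_chg _ u r s t qx qy hu hQ. rewrite -hV in hQ'.
  move/eqP: hc; rewrite mulf_eq0 => /orP [/eqP a0 | /eqP hab24].
  + subst a.
    have [c hcb] := caseA _ _ _ hb hQ'.
    subst b.
    have cn0 : c != 0 by apply/negP => /eqP c0; move: hb; rewrite c0 expr0n.
    split.
    * apply: (isoQ_trans _ _ _ hiso). exists c, 0, 0, 0; rewrite /N /E0 /=.
      split; first by [].
      split; first by ring.
      split; first by ring.
      split; first by ring.
      split; first by ring.
      by ring.
    * apply: (isoQ_trans _ _ _ hvel). exists c, 0, 0, 0; rewrite /V /E7 /=.
      split; first by [].
      split; first by ring.
      split; first by ring.
      split; first by ring.
      split; first by ring.
      by ring.
  + exfalso.
    have an0 : a != 0.
      apply/negP => /eqP a0; move: hab24; rewrite a0 => h.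
      have : b = 0 by eapply (eq_viak (- 24^-1)); [exact: h | field].
      by move/eqP; rewrite (negbTE hb).
    have hb' : b = a ^+ 3 / 24 by eapply (eq_viak (- 24^-1)); [exact: hab24 | field].
    rewrite hb' in hQ'.
    exact: (caseB _ _ _ an0 hQ').
- move=> [_ h7].
  have [u [r [s [t [hu hV]]]]] := (isoQ_chg _ _).1 h7.
  eexists; rewrite hV; exact: (@order3_chg _ u r s t 3 4 hu E7_pt).
Qed.
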